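(* Let $1,2,3,4$ be four distinct vertices of $G$ such that $G[\{1,2,3,4\}]$ has edge set exactly $\{12,13,23,24,34\}$. If $\Gamma_G$ is population monotonic, then $w_{23}\ge w_{12}+w_{13}$ and $w_{23}\ge w_{24}+w_{34}$.
   Context: $G=(V,E;w)$ is a finite simple graph with edge weights $w:E\to\mathbb{R}$, $w_e>0$ for all $e\in E$; $w_{ij}$ denotes the weight of edge $ij$. The matching game on $G$ is the cooperative game $\Gamma_G=(N,\gamma)$ with player set $N=V$ and, for $S\subseteq N$, $\gamma(S)$ equal to the maximum weight of a matching in the induced subgraph $G[S]$ (so $\gamma(\emptyset)=0$). A population monotonic allocation scheme (PMAS) is a family $(\boldsymbol{x}_S)_{\emptyset\neq S\subseteq N}$ with $\boldsymbol{x}_S=(x_{S,i})_{i\in S}\in\mathbb{R}^S$ such that (efficiency) $\sum_{i\in S}x_{S,i}=\gamma(S)$ for every nonempty $S\subseteq N$, and (monotonicity) $x_{S,i}\le x_{T,i}$ whenever $\emptyset\ne S\subseteq T\subseteq N$ and $i\in S$. $\Gamma_G$ is called population monotonic if it admits a PMAS. *)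

(* Defs.v *)
From mathcomp Require Import all_boot all_order all_algebra.
Set Implicit Arguments. Unset Strict Implicit. Unset Printing Implicit Defensive.
Import Order.TTheory GRing.Theory Num.Theory.
Local Open Scope ring_scope.

(* A finite simple graph: vertex type T, symmetric irreflexive edge relation e.
   Edge weights: w : T -> T -> R, required symmetric and positive on edges
   (values of w on non-edges are irrelevant). *)

Definition simple_graph (T : finType) (e : rel T) : Prop :=
  (forall u, ~~ e u u) /\ (forall u v, e u v = e v u).

(* A matching in the induced subgraph G[S], represented as a set of ordered
   pairs (u,v) (each edge listed once), with both ends in S, joined by an edge,
   and distinct pairs vertex-disjoint. *)
Definition is_matching (T : finType) (e : rel T) (S : {set T})
  (M : {set T * T}) : bool :=
  [forall p in M, [&& e p.1 p.2, p.1 \in S & p.2 \in S]] &&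
  [forall p in M, forall q in M, (p != q) ==>
     [disjoint [set p.1; p.2] & [set q.1; q.2]]].

Definition matching_weight (R : numDomainType) (T : finType)
  (w : T -> T -> R) (M : {set T * T}) : R :=
  \sum_(p in M) w p.1 p.2.

(* gamma(S): maximum weight of a matching in G[S] (the empty matching has
   weight 0, so 0 is a valid neutral element for the max). *)
Definition gamma (R : realDomainType) (T : finType) (e : rel T)
  (w : T -> T -> R) (S : {set T}) : R :=
  \big[Num.max/0]_(M : {set T * T} | is_matching e S M) matching_weight w M.

(* Population monotonic allocation scheme: x S i is the payoff of i in S
   (only meaningful for i \in S, S nonempty). *)
Definition is_PMAS (R : realDomainType) (T : finType) (e : rel T)
  (w : T -> T -> R) (x : {set T} -> T -> R) : Prop :=
  (forall S : {set T}, S != set0 -> \sum_(i in S) x S i = gamma e w S) /\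
  (forall (S U : {set T}) (i : T), S != set0 -> S \subset U -> i \in S ->
     x S i <= x U i).

Definition population_monotonic (R : realDomainType) (T : finType)
  (e : rel T) (w : T -> T -> R) : Prop :=
  exists x : {set T} -> T -> R, is_PMAS e w x.

(* Main.v *)
Require Import Defs.
From mathcomp Require Import all_boot all_order all_algebra.
From mathcomp Require Import lra.
Import Order.TTheory GRing.Theory Num.Theory.
Local Open Scope ring_scope.

Section H.
Variables (R : realFieldType) (T : finType) (e : rel T) (w : T -> T -> R).

Lemma match0 (S : {set T}) : is_matching e S set0.
Proof.
apply/andP; split; apply/forall_inP => p; by rewrite inE.
Qed.

Lemma gamma_ge0 (S : {set T}) : 0 <= gamma e w S.
Proof.
rewrite /gamma; apply: (bigmax_sup set0); first exact: match0.
by rewrite /matching_weight big_set0.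
Qed.

Lemma gamma_edge (S : {set T}) a b : e a b -> a \in S -> b \in S -> w a b <= gamma e w S.
Proof.
move=> eab aS bS; rewrite /gamma; apply: (bigmax_sup [set (a, b)]).
  apply/andP; split; apply/forall_inP => p; rewrite inE => /eqP -> /=.
    by rewrite eab aS bS.
  apply/forall_inP => q; rewrite inE => /eqP ->; by rewrite eqxx.
by rewrite /matching_weight big_set1.
Qed.

Lemma matching_single (S : {set T}) (M : {set T * T}) (p q : T * T) : (forall u, ~~ e u u) -> (#|S| <= 3)%N ->
  is_matching e S M -> p \in M -> q \in M -> p = q.
Proof.
move=> irr cS /andP[/forall_inP H1 /forall_inP H2] pM qM.
apply/eqP; apply/negPn/negP => npq.
have /implyP := (forall_inP (H2 p pM) q qM) => /(_ npq) dis.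
have /and3P[ep p1S p2S] := H1 p pM.
have /and3P[eq q1S q2S] := H1 q qM.
have np : p.1 != p.2 by apply: contraTneq ep => ->; rewrite (negbTE (irr _)).
have nq : q.1 != q.2 by apply: contraTneq eq => ->; rewrite (negbTE (irr _)).
have sub : [set p.1; p.2] :|: [set q.1; q.2] \subset S.
  by apply/subsetP => z; rewrite !inE => /orP[]/orP[]/eqP->.
have := subset_leq_card sub.
rewrite cardsU (disjoint_setI0 dis) cards0 subn0 !cards2 np nq => H.
have := leq_trans H cS. done.
Qed.

Lemma gamma3_le a b c c0 : (forall u, ~~ e u u) -> (forall u v, w u v = w v u) ->
  (forall u v, e u v = e v u) -> 0 <= c0 ->
  (e a b -> w a b <= c0) -> (e a c -> w a c <= c0) -> (e b c -> w b c <= c0) ->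
  gamma e w [set a; b; c] <= c0.
Proof.
move=> irr ws es c0p Hab Hac Hbc.
rewrite /gamma; apply/bigmax_leP; split => // M HM.
have cS : (#|[set a; b; c]| <= 3)%N.
  rewrite -setUA cardsU1 cards2; case: (a \in _); case: (b != c) => //.
case: (set_0Vmem M) => [->|[p pM]]; first by rewrite /matching_weight big_set0.
have -> : M = [set p].
  apply/setP => q; rewrite inE; apply/idP/eqP => [qM|->//].
  exact: (matching_single _ _ _ _ irr cS HM qM pM).
rewrite /matching_weight big_set1.
move: HM => /andP[/forall_inP H1 _].
have /and3P[ep] := H1 p pM.
case: p {pM H1} ep => u v /= euv.
rewrite !inE => /orP[/orP[]|]/eqP eu /orP[/orP[]|]/eqP ev; subst u v;
  try by rewrite (negbTE (irr _)) in euv.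
all: first [ by apply: Hab | by apply: Hac | by apply: Hbc
  | by rewrite ws; apply: Hab; rewrite es | by rewrite ws; apply: Hac; rewrite es
  | by rewrite ws; apply: Hbc; rewrite es ].
Qed.

End H.

Ltac memb := rewrite ?inE; rewrite ?eqxx ?orbT ?orTb ?orbT //.
Ltac subs := apply/subsetP => ?; rewrite !inE => /orP[]/eqP->; memb.

Lemma sum2 (R : realFieldType) (T : finType) (F : T -> R) u v : u != v ->
  \sum_(i in [set u; v]) F i = F u + F v.
Proof. by move=> nuv; rewrite big_setU1 ?inE // big_set1. Qed.

Lemma sum3 (R : realFieldType) (T : finType) (F : T -> R) u v t :
  uniq [:: u; v; t] ->
  \sum_(i in [set u; v; t]) F i = F u + F v + F t.
Proof.
rewrite /= !inE negb_or andbT => /andP[/andP[nuv nut] nvt].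
by rewrite -setUA big_setU1 /= ?inE ?negb_or ?nuv ?nut // sum2 // addrA.
Qed.

Lemma maxlt {R : realFieldType} {p q g : R} : (p <= q -> g <= q) -> (q <= p -> g <= p) ->
  0 < p -> 0 < q -> g < p + q.
Proof. move=> h1 h2 *; have [h|h] := lerP p q; [have := h1 h | have := h2 (ltW h)]; lra. Qed.

Lemma arithA {R : realFieldType} {w12 w13 w34 x12a x12b ya yb yc gy g12 x13a x13c g13
   va vc vd x34c x34d g34 gv : R} :
  x12a + x12b = g12 -> w12 <= g12 -> x12a <= ya -> x12b <= yb -> ya + yb + yc = gy ->
  gy <= w12 -> x13c <= yc -> 0 <= x13c -> x13a + x13c = g13 -> w13 <= g13 ->
  x13a <= va -> x34c <= vc -> x34d <= vd -> x34c + x34d = g34 -> w34 <= g34 ->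
  va + vc + vd = gv -> gv < w13 + w34 -> False.
Proof. move=> *; lra. Qed.

Lemma arithC {R : realFieldType} {w12 w13 w23 x12a x12b x13a x13c x23b x23c ya yb yc
   g12 g13 g23 gy : R} :
  x12a + x12b = g12 -> w12 <= g12 -> x13a + x13c = g13 -> w13 <= g13 ->
  x23b + x23c = g23 -> w23 <= g23 ->
  x12a <= ya -> x12b <= yb -> x13a <= ya -> x13c <= yc -> x23b <= yb -> x23c <= yc ->
  0 <= ya -> ya + yb + yc = gy -> gy <= w23 -> w12 + w13 <= w23.
Proof. move=> *; lra. Qed.

Lemma claim {R : realFieldType} {T : finType} {e : rel T} {w : T -> T -> R}
  {x : {set T} -> T -> R}
  (irr : forall u, ~~ e u u) (es : forall u v, e u v = e v u)
  (ws : forall u v, w u v = w v u) (wp : forall u v, e u v -> 0 < w u v)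
  {a b c d : T} (Hd : uniq [:: a; b; c; d])
  (Hab : e a b) (Hac : e a c) (Hbc : e b c) (Hbd : e b d) (Hcd : e c d)
  (Had : ~~ e a d) :
  is_PMAS e w x -> w a b + w a c <= w b c.
Proof.
move=> [Heff Hmon].
move: (Hd); rewrite /= !inE !negb_or => /and4P[/and3P[nab nac nad] /andP[nbc nbd] ncd _].
have mono : forall (S U : {set T}) i, i \in S -> S \subset U -> x S i <= x U i.
  move=> S U i iS SU; apply: Hmon => //; apply/set0Pn; by exists i.
have nn : forall (S : {set T}) i, i \in S -> 0 <= x S i.
  move=> S i iS; apply: le_trans (mono [set i] S i _ _); last 2 first.
  - by rewrite inE.
  - by rewrite sub1set.
  have := Heff [set i] ltac:(apply/set0Pn; exists i; memb); rewrite big_set1 => ->; exact: gamma_ge0.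
have s2 : forall u v, u != v -> x [set u; v] u + x [set u; v] v = gamma e w [set u; v].
  move=> u v nuv; rewrite -sum2 //; apply: Heff; apply/set0Pn; exists u; memb.
have s3 : forall u v t, uniq [:: u; v; t] ->
   x [set u; v; t] u + x [set u; v; t] v + x [set u; v; t] t = gamma e w [set u; v; t].
  move=> u v t ut; rewrite -sum3 //; apply: Heff; apply/set0Pn; exists u; memb.
have E12 := s2 _ _ nab. have E13 := s2 _ _ nac. have E23 := s2 _ _ nbc.
have E24 := s2 _ _ nbd. have E34 := s2 _ _ ncd.
have G12 : w a b <= gamma e w [set a; b] by apply: gamma_edge => //; memb.
have G13 : w a c <= gamma e w [set a; c] by apply: gamma_edge => //; memb.
have G23 : w b c <= gamma e w [set b; c] by apply: gamma_edge => //; memb.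
have G24 : w b d <= gamma e w [set b; d] by apply: gamma_edge => //; memb.
have G34 : w c d <= gamma e w [set c; d] by apply: gamma_edge => //; memb.
have Yabc : uniq [:: a; b; c] by rewrite /= ?inE ?negb_or nab nac nbc.
have Yacd : uniq [:: a; c; d] by rewrite /= ?inE ?negb_or nac nad ncd.
have Yabd : uniq [:: a; b; d] by rewrite /= ?inE ?negb_or nab nad nbd.
have Ty := s3 _ _ _ Yabc. have Tv := s3 _ _ _ Yacd. have Tu := s3 _ _ _ Yabd.
have m1 := mono [set a; b] [set a; b; c] a ltac:(memb) ltac:(subs).
have m2 := mono [set a; b] [set a; b; c] b ltac:(memb) ltac:(subs).
have m3 := mono [set a; c] [set a; b; c] a ltac:(memb) ltac:(subs).
have m4 := mono [set a; c] [set a; b; c] c ltac:(memb) ltac:(subs).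
have m5 := mono [set b; c] [set a; b; c] b ltac:(memb) ltac:(subs).
have m6 := mono [set b; c] [set a; b; c] c ltac:(memb) ltac:(subs).
have m7 := mono [set a; c] [set a; c; d] a ltac:(memb) ltac:(subs).
have m8 := mono [set c; d] [set a; c; d] c ltac:(memb) ltac:(subs).
have m9 := mono [set c; d] [set a; c; d] d ltac:(memb) ltac:(subs).
have m10 := mono [set a; b] [set a; b; d] a ltac:(memb) ltac:(subs).
have m11 := mono [set b; d] [set a; b; d] b ltac:(memb) ltac:(subs).
have m12 := mono [set b; d] [set a; b; d] d ltac:(memb) ltac:(subs).
have n1 := nn [set a; b; c] a ltac:(memb).
have n2 := nn [set a; c] c ltac:(memb).
have n3 := nn [set a; b] b ltac:(memb).
have p12 := wp _ _ Hab. have p13 := wp _ _ Hac. have p23 := wp _ _ Hbc.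
have p24 := wp _ _ Hbd. have p34 := wp _ _ Hcd.
have es' := es. have irr' := irr.
have g3 : forall u v t c0, 0 <= c0 -> (e u v -> w u v <= c0) -> (e u t -> w u t <= c0) ->
   (e v t -> w v t <= c0) -> gamma e w [set u; v; t] <= c0.
  by move=> u v t c0 *; apply: gamma3_le.
have Gv1 : w a c <= w c d -> gamma e w [set a; c; d] <= w c d.
  move=> h; apply: g3 => // [|H]; [exact: ltW p34 | by rewrite H in Had].
have Gv2 : w c d <= w a c -> gamma e w [set a; c; d] <= w a c.
  move=> h; apply: g3 => // [|H]; [exact: ltW p13 | by rewrite H in Had].
have Gu1 : w a b <= w b d -> gamma e w [set a; b; d] <= w b d.
  move=> h; apply: g3 => // [|H]; [exact: ltW p24 | by rewrite H in Had].
have Gu2 : w b d <= w a b -> gamma e w [set a; b; d] <= w a b.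
  move=> h; apply: g3 => // [|H]; [exact: ltW p12 | by rewrite H in Had].
have Gy1 : w a b <= w b c -> w a c <= w b c -> gamma e w [set a; b; c] <= w b c.
  move=> h h'; apply: g3 => //; exact: ltW p23.
have Gy2 : w b c <= w a b -> w a c <= w a b -> gamma e w [set a; b; c] <= w a b.
  move=> h h'; apply: g3 => //; exact: ltW p12.
have Gy3 : w a b <= w a c -> w b c <= w a c -> gamma e w [set a; b; c] <= w a c.
  move=> h h'; apply: g3 => //; exact: ltW p13.
have CA : w b c <= w a b -> w a c <= w a b -> False.
  move=> h h'; exact: (arithA E12 G12 m1 m2 Ty (Gy2 h h') m4 n2 E13 G13 m7 m8 m9
     E34 G34 Tv (maxlt Gv1 Gv2 p13 p34)).
have CB : w a b <= w a c -> w b c <= w a c -> False.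
  move=> h h'; exact: (arithA E13 G13 m3 m4 (etrans (addrAC _ _ _) Ty) (Gy3 h h')
     m2 n3 E12 G12 m10 m11 m12 E24 G24 Tu (maxlt Gu1 Gu2 p12 p24)).
have [h1|h1] := lerP (w a b) (w b c); have [h2|h2] := lerP (w a c) (w b c).
- exact: (arithC E12 G12 E13 G13 E23 G23 m1 m2 m3 m4 m5 m6 n1 Ty (Gy1 h1 h2)).
- have [h3|h3] := lerP (w a b) (w a c).
    by case: (CB h3 (ltW h2)).
  by case: (CA (le_trans (ltW h2) (ltW h3)) (ltW h3)).
- have [h3|h3] := lerP (w a c) (w a b).
    by case: (CA (ltW h1) h3).
  by case: (CB (ltW h3) (le_trans (ltW h1) (ltW h3))).
- have [h3|h3] := lerP (w a c) (w a b).
    by case: (CA (ltW h1) h3).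
  by case: (CB (ltW h3) (ltW h2)).
Qed.

Theorem mainTheorem7 (R : realFieldType) (T : finType) (e : rel T)
  (w : T -> T -> R)
  (Hsimple : simple_graph e)
  (Hwsym : forall u v, w u v = w v u)
  (Hwpos : forall u v, e u v -> 0 < w u v)
  (v1 v2 v3 v4 : T)
  (Hdistinct : uniq [:: v1; v2; v3; v4])
  (H12 : e v1 v2) (H13 : e v1 v3) (H23 : e v2 v3)
  (H24 : e v2 v4) (H34 : e v3 v4) (H14 : ~~ e v1 v4) :
  population_monotonic e w ->
  w v1 v2 + w v1 v3 <= w v2 v3 /\ w v2 v4 + w v3 v4 <= w v2 v3.
Proof.
case: Hsimple => irr es [x Hx]; split.
  exact: (claim irr es Hwsym Hwpos Hdistinct H12 H13 H23 H24 H34 H14 Hx).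
rewrite (Hwsym v2 v4) (Hwsym v3 v4).
have Hd : uniq [:: v4; v2; v3; v1].
  move: Hdistinct; rewrite /= !inE !negb_or => /and4P[/and3P[n12 n13 n14] /andP[n23 n24] n34 _].
  rewrite /= ?inE ?negb_or; rewrite !(eq_sym v4) (eq_sym v2 v1) (eq_sym v3 v1) n14 n24 n34 n23 n12 n13 //.
have H42 : e v4 v2 by rewrite es.
have H43 : e v4 v3 by rewrite es.
have H21 : e v2 v1 by rewrite es.
have H31 : e v3 v1 by rewrite es.
have H41 : ~~ e v4 v1 by rewrite es.
exact: (claim irr es Hwsym Hwpos Hd H42 H43 H23 H21 H31 H41 Hx).
Qed.
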